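(* Let $\mathfrak{H}$ be a Euclidean space and let $(\mathcal{X},\mathsf{S},\gamma,(\Lambda_{a})_{a\in\mathcal{A}})$ be a spectral decomposition system for $\mathfrak{H}$ such that the set $\{\Lambda_a\}_{a\in\mathcal{A}}$ is closed in $\mathscr{L}(\mathcal{X},\mathfrak{H})$. Let $\varphi\colon\mathcal{X}\to[-\infty,+\infty]$ be $\mathsf{S}$-invariant and let $X\in\mathfrak{H}$. Then: (i) $\partial_{\mathsf{F}}(\varphi\circ\gamma)(X)=\{\Lambda_a y: y\in\partial_{\mathsf{F}}\varphi(\gamma(X))\ \text{and}\ a\in\mathcal{A}_X\}$; (ii) $\partial_{\mathsf{L}}(\varphi\circ\gamma)(X)=\{\Lambda_a y: y\in\partial_{\mathsf{L}}\varphi(\gamma(X))\ \text{and}\ a\in\mathcal{A}_X\}$.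
   Context: A Euclidean space is a finite-dimensional real Hilbert space; $\mathscr{L}(\mathcal{X},\mathfrak{H})$ carries the operator-norm topology. A spectral decomposition system for a Euclidean space $\mathfrak{H}$ is a tuple $(\mathcal{X},\mathsf{S},\gamma,(\Lambda_a)_{a\in\mathcal{A}})$ where $\mathcal{X}$ is a Euclidean space, $\mathsf{S}$ is a group acting on $\mathcal{X}$ such that each map $x\mapsto \mathsf{s}\cdot x$ is a linear isometry, $\gamma\colon\mathfrak{H}\to\mathcal{X}$ is a mapping, and each $\Lambda_a\colon\mathcal{X}\to\mathfrak{H}$ is a linear isometry, such that: [A] there exists a mapping $\tau\colon\mathcal{X}\to\mathcal{X}$ with $\tau(\mathsf{s}\cdot x)=\tau(x)$ for all $\mathsf{s},x$, $\tau(x)\in\mathsf{S}\cdot x$ for all $x$, and $\gamma\circ\Lambda_a=\tau$ for all $a\in\mathcal{A}$; [B] for every $X\in\mathfrak{H}$ there exists $a\in\mathcal{A}$ with $X=\Lambda_a\gamma(X)$; [C] $\langle X,Y\rangle\le\langle\gamma(X),\gamma(Y)\rangle$ for all $X,Y\in\mathfrak{H}$. $\mathcal{A}_X=\{a\in\mathcal{A}:X=\Lambda_a\gamma(X)\}$. A function $\varphi$ on $\mathcal{X}$ is $\mathsf{S}$-invariant if $\varphi(\mathsf{s}\cdot x)=\varphi(x)$ for all $\mathsf{s}\in\mathsf{S}$, $x\in\mathcal{X}$. For $f\colon\mathcal{H}\to[-\infty,+\infty]$ on a Euclidean space $\mathcal{H}$: the Fréchet subdifferential is $\partial_{\mathsf{F}}f(x)=\{y:\liminf_{z\to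 x,z\ne x}(f(z)-f(x)-\langle z-x,y\rangle)/\|z-x\|\ge0\}$ if $f(x)\in\mathbb{R}$ and $\varnothing$ otherwise; the limiting subdifferential $\partial_{\mathsf{L}}f(x)$, for $f(x)\in\mathbb{R}$, is the set of $y$ for which there exist $x_n\to x$ with $f(x_n)\to f(x)$ and $y_n\to y$ with $y_n\in\partial_{\mathsf{F}}f(x_n)$, and $\partial_{\mathsf{L}}f(x)=\varnothing$ if $f(x)\in\{\pm\infty\}$. *)

(* Defs.v *)
From HB Require Import structures.
From mathcomp Require Import all_boot all_order all_algebra.
From mathcomp Require Import all_classical all_reals all_analysis.
Set Implicit Arguments. Unset Strict Implicit. Unset Printing Implicit Defensive.
Import Order.TTheory GRing.Theory Num.Theory.
Import numFieldNormedType.Exports.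
Local Open Scope classical_set_scope.
Local Open Scope ring_scope.

(* A Euclidean space of dimension n is modelled by row vectors 'rV[R]_n with
   the standard inner product. *)
Definition dot {R : realType} {n : nat} (u v : 'rV[R]_n) : R :=
  \sum_(i < n) u ord0 i * v ord0 i.

Definition enorm {R : realType} {n : nat} (u : 'rV[R]_n) : R :=
  Num.sqrt (dot u u).

Definition mx_isometry {R : realType} {m n : nat} (L : 'M[R]_(m, n)) : Prop :=
  forall x : 'rV[R]_m, enorm (x *m L) = enorm x.

Definition is_isometric_group_action {R : realType} {m : nat} {G : Type}
  (mul : G -> G -> G) (one : G) (inv : G -> G) (act : G -> 'M[R]_m) : Prop :=
  [/\ (forall s t u, mul s (mul t u) = mul (mul s t) u),
      (forall s, mul one s = s),
      (forall s, mul (inv s) s = one),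
      (act one = 1%:M /\ forall s t, act (mul s t) = act t *m act s)
    & (forall s, mx_isometry (act s))].

Definition orbit_of {R : realType} {m : nat} {G : Type} (act : G -> 'M[R]_m)
  (x : 'rV[R]_m) : set 'rV[R]_m := [set x *m act s | s in [set: G]].

(* Spectral decomposition system (X = 'rV_m, S = (G, mul, one, inv, act),
   gamma, (Lam a)_{a in A}) for H = 'rV_n; Lam a acts by x |-> x *m Lam a. *)
Definition spectral_decomposition_system {R : realType} {m n : nat} {G A : Type}
  (mul : G -> G -> G) (one : G) (inv : G -> G) (act : G -> 'M[R]_m)
  (gam : 'rV[R]_n -> 'rV[R]_m) (Lam : A -> 'M[R]_(m, n)) : Prop :=
  [/\ is_isometric_group_action mul one inv act,
      (forall a, mx_isometry (Lam a)),
      (exists tau : 'rV[R]_m -> 'rV[R]_m,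
         [/\ (forall s x, tau (x *m act s) = tau x),
             (forall x, orbit_of act x (tau x))
           & (forall a x, gam (x *m Lam a) = tau x)]),
      (forall X : 'rV[R]_n, exists a, X = gam X *m Lam a)
    & (* [C] *)
      (forall X Y : 'rV[R]_n, dot X Y <= dot (gam X) (gam Y))].

Definition adapted {R : realType} {m n : nat} {A : Type}
  (gam : 'rV[R]_n -> 'rV[R]_m) (Lam : A -> 'M[R]_(m, n)) (X : 'rV[R]_n) (a : A) : Prop :=
  X = gam X *m Lam a.

Definition S_invariant {R : realType} {m : nat} {G : Type} (act : G -> 'M[R]_m)
  (phi : 'rV[R]_m -> \bar R) : Prop :=
  forall s x, phi (x *m act s) = phi x.

(* Frechet subdifferential: f x real and
   liminf_{z -> x, z <> x} (f z - f x - <z - x, y>) / ||z - x|| >= 0,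
   written out with epsilon-delta. *)
Definition frechet_subdiff {R : realType} {n : nat} (f : 'rV[R]_n -> \bar R)
  (x : 'rV[R]_n) : set 'rV[R]_n :=
  [set y | (exists r : R, f x = r%:E) /\
     forall e : R, 0 < e -> exists2 d : R, 0 < d &
       forall z : 'rV[R]_n, 0 < enorm (z - x) < d ->
         ((dot (z - x) y - e * enorm (z - x))%:E <= f z - f x)%E].

Definition limiting_subdiff {R : realType} {n : nat} (f : 'rV[R]_n -> \bar R)
  (x : 'rV[R]_n) : set 'rV[R]_n :=
  [set y | (exists r : R, f x = r%:E) /\
     exists (xs ys : nat -> 'rV[R]_n),
       [/\ xs @ \oo --> x,
           (fun k => f (xs k)) @ \oo --> f x,
           ys @ \oo --> y
         & forall k, frechet_subdiff f (xs k) (ys k)]].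

(* Main.v *)
Require Import Defs.
From HB Require Import structures.
From mathcomp Require Import all_boot all_order all_algebra.
From mathcomp Require Import all_classical all_reals all_analysis.
From mathcomp Require Import ring lra.
Set Implicit Arguments. Unset Strict Implicit. Unset Printing Implicit Defensive.
Import Order.TTheory GRing.Theory Num.Theory.
Import numFieldNormedType.Exports.
Local Open Scope classical_set_scope.
Local Open Scope ring_scope.

Section Basic.
Variable R : realType.

Lemma dotC n (u v : 'rV[R]_n) : dot u v = dot v u.
Proof. by apply: eq_bigr => i _; rewrite mulrC. Qed.

Lemma dotDl n (u w v : 'rV[R]_n) : dot (u + w) v = dot u v + dot w v.
Proof. by rewrite /dot -big_split; apply: eq_bigr => i _; rewrite mxE mulrDl. Qed.

Lemma dotZl n a (u v : 'rV[R]_n) : dot (a *: u) v = a * dot u v.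
Proof. by rewrite /dot mulr_sumr; apply: eq_bigr => i _; rewrite mxE mulrA. Qed.

Lemma dotNl n (u v : 'rV[R]_n) : dot (- u) v = - dot u v.
Proof. by rewrite -scaleN1r dotZl mulN1r. Qed.

Lemma dotBl n (u w v : 'rV[R]_n) : dot (u - w) v = dot u v - dot w v.
Proof. by rewrite dotDl dotNl. Qed.

Lemma dotDr n (u w v : 'rV[R]_n) : dot v (u + w) = dot v u + dot v w.
Proof. by rewrite dotC dotDl !(dotC v). Qed.

Lemma dotBr n (u w v : 'rV[R]_n) : dot v (u - w) = dot v u - dot v w.
Proof. by rewrite dotC dotBl !(dotC v). Qed.

Lemma dotZr n a (u v : 'rV[R]_n) : dot v (a *: u) = a * dot v u.
Proof. by rewrite dotC dotZl dotC. Qed.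

Lemma dot0l n (v : 'rV[R]_n) : dot 0 v = 0.
Proof. by rewrite /dot big1 // => i _; rewrite mxE mul0r. Qed.

Lemma dot0r n (v : 'rV[R]_n) : dot v 0 = 0.
Proof. by rewrite dotC dot0l. Qed.

Lemma dot_ge0 n (u : 'rV[R]_n) : 0 <= dot u u.
Proof. by apply: sumr_ge0 => i _; rewrite -expr2 sqr_ge0. Qed.

Lemma dot_eq0 n (u : 'rV[R]_n) : dot u u = 0 -> u = 0.
Proof.
move=> /eqP; rewrite psumr_eq0 => [/allP H|i _]; last by rewrite -expr2 sqr_ge0.
apply/rowP => i; rewrite mxE; have := H i (mem_index_enum _).
by rewrite -expr2 sqrf_eq0 => /eqP.
Qed.

Lemma enorm_ge0 n (u : 'rV[R]_n) : 0 <= enorm u.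
Proof. exact: sqrtr_ge0. Qed.

Lemma enorm_sq n (u : 'rV[R]_n) : enorm u ^+ 2 = dot u u.
Proof. by rewrite /enorm sqr_sqrtr // dot_ge0. Qed.

Lemma enorm_eq0 n (u : 'rV[R]_n) : enorm u = 0 -> u = 0.
Proof. by move=> H; apply: dot_eq0; rewrite -enorm_sq H expr0n. Qed.

Lemma enorm0 n : enorm (0 : 'rV[R]_n) = 0.
Proof. by rewrite /enorm dot0l sqrtr0. Qed.

Lemma enorm_le n (u : 'rV[R]_n) c : 0 <= c -> dot u u <= c ^+ 2 -> enorm u <= c.
Proof.
move=> c0 H; rewrite /enorm -(ger0_norm c0) -sqrtr_sqr.
by rewrite ler_sqrt // sqr_ge0.
Qed.

Lemma enorm_leP n (u : 'rV[R]_n) c : 0 <= c -> (enorm u <= c) = (dot u u <= c ^+ 2).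
Proof.
move=> c0; apply/idP/idP; last exact: enorm_le.
move=> H; rewrite -enorm_sq ler_pXn2r // ?nnegrE ?enorm_ge0 //.
Qed.

Lemma CS n (u v : 'rV[R]_n) : dot u v <= enorm u * enorm v.
Proof.
have [u0|u0] := eqVneq (enorm u) 0.
  by rewrite (enorm_eq0 u0) dot0l enorm0 mul0r.
have [v0|v0] := eqVneq (enorm v) 0.
  by rewrite (enorm_eq0 v0) dot0r enorm0 mulr0.
have up : 0 < enorm u by rewrite lt_def u0 enorm_ge0.
have vp : 0 < enorm v by rewrite lt_def v0 enorm_ge0.
set a := enorm u; set b := enorm v.
have H := dot_ge0 (b *: u - a *: v).
rewrite !(dotBl, dotBr, dotZl, dotZr) -!enorm_sq -/a -/b (dotC v u) in H.
have : 0 <= 2 * a * b * (a * b - dot u v) by lra.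
by rewrite pmulr_rge0 ?subr_ge0 // !mulr_gt0.
Qed.

Lemma CSabs n (u v : 'rV[R]_n) : `|dot u v| <= enorm u * enorm v.
Proof.
rewrite ler_norml CS andbT.
have := CS (- u) v; rewrite dotNl.
have -> : enorm (- u) = enorm u by rewrite /enorm dotNl dotC dotNl opprK.
lra.
Qed.

Lemma enormN n (u : 'rV[R]_n) : enorm (- u) = enorm u.
Proof. by rewrite /enorm dotNl dotC dotNl opprK. Qed.

Lemma enormB n (u v : 'rV[R]_n) : enorm (u - v) = enorm (v - u).
Proof. by rewrite -enormN opprB. Qed.

Lemma enormZ n a (u : 'rV[R]_n) : enorm (a *: u) = `|a| * enorm u.
Proof.
by rewrite /enorm dotZl dotZr mulrA -expr2 sqrtrM ?sqr_ge0 // sqrtr_sqr.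
Qed.

Lemma enorm_sqD n (u v : 'rV[R]_n) :
  enorm (u + v) ^+ 2 = enorm u ^+ 2 + 2 * dot u v + enorm v ^+ 2.
Proof. rewrite !enorm_sq !(dotDl, dotDr) (dotC v u); ring. Qed.

Lemma enorm_sqB n (u v : 'rV[R]_n) :
  enorm (u - v) ^+ 2 = enorm u ^+ 2 - 2 * dot u v + enorm v ^+ 2.
Proof. rewrite !enorm_sq !(dotBl, dotBr) (dotC v u); ring. Qed.

Lemma enormD n (u v : 'rV[R]_n) : enorm (u + v) <= enorm u + enorm v.
Proof.
apply: enorm_le; first by rewrite addr_ge0 ?enorm_ge0.
rewrite -enorm_sq enorm_sqD; have := CS u v; nra.
Qed.

Lemma enorm_tri n (u v w : 'rV[R]_n) : enorm (u - w) <= enorm (u - v) + enorm (v - w).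
Proof. by rewrite (_ : u - w = (u - v) + (v - w)) ?enormD // addrA subrK. Qed.

End Basic.

Section Mx.
Variable R : realType.

Lemma dot_mulmx m n (u : 'rV[R]_m) (L : 'M[R]_(m, n)) (w : 'rV[R]_n) :
  dot (u *m L) w = dot u (w *m L^T).
Proof.
rewrite /dot.
under eq_bigr do rewrite mxE big_distrl /=.
rewrite exchange_big /=; apply: eq_bigr => i _.
rewrite mxE big_distrr /=; apply: eq_bigr => j _; rewrite mxE; ring.
Qed.

Lemma iso_dot m n (L : 'M[R]_(m, n)) (u v : 'rV[R]_m) :
  mx_isometry L -> dot (u *m L) (v *m L) = dot u v.
Proof.
move=> iso.
have H w : dot (w *m L) (w *m L) = dot w w by rewrite -!enorm_sq iso.
have := H (u + v); rewrite mulmxDl !(dotDl, dotDr) !H (dotC (v *m L)) (dotC v).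
lra.
Qed.

Lemma iso_mulT m n (L : 'M[R]_(m, n)) (u : 'rV[R]_m) :
  mx_isometry L -> u *m L *m L^T = u.
Proof.
move=> iso; apply/eqP; rewrite -subr_eq0; apply/eqP/dot_eq0.
set w := _ - u.
have E : dot (u *m L *m L^T) w = dot u w by rewrite dot_mulmx trmxK iso_dot.
by rewrite {1}/w dotBl E subrr.
Qed.

Lemma enorm_mulT m n (L : 'M[R]_(m, n)) (w : 'rV[R]_n) :
  mx_isometry L -> enorm (w *m L^T) <= enorm w.
Proof.
move=> iso; set p := w *m L^T.
have E : enorm p ^+ 2 <= enorm p * enorm w.
  rewrite enorm_sq {2}/p -(trmxK L) -dot_mulmx trmxK.
  by apply: le_trans (CS _ _) _; rewrite iso.
have [p0|p0] := eqVneq (enorm p) 0; first by rewrite p0 enorm_ge0.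
have pp : 0 < enorm p by rewrite lt_def p0 enorm_ge0.
by rewrite expr2 ler_pM2l in E.
Qed.

Lemma entry_le_enorm n (u : 'rV[R]_n) i : `|u ord0 i| <= enorm u.
Proof.
rewrite -sqrtr_sqr /enorm ler_sqrt ?dot_ge0 //.
rewrite /dot (bigD1 i) //= -expr2 lerDl sumr_ge0 // => j _; rewrite -expr2 sqr_ge0.
all: by [].
Qed.

Lemma entry_le_mxnorm m n (M : 'M[R]_(m, n)) i j : `|M i j| <= `|M|.
Proof.
rewrite [X in _ <= X]/Num.norm /= mx_normrE.
by apply/bigmax_geP; right; exists (i, j).
Qed.

Lemma mxnorm_le m n (M : 'M[R]_(m, n)) c :
  0 <= c -> (forall i j, `|M i j| <= c) -> `|M| <= c.
Proof.
move=> c0 H; rewrite [X in X <= _]/Num.norm /= mx_normrE.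
by apply/bigmax_leP; split => // -[i j] _; apply: H.
Qed.

Lemma enorm_le_sum n (u : 'rV[R]_n) : enorm u <= \sum_i `|u ord0 i|.
Proof.
apply: enorm_le; first by apply: sumr_ge0.
rewrite expr2 mulr_suml /dot; apply: ler_sum => i _.
rewrite -[u _ _ * _]real_normK ?num_real // expr2; apply: ler_wpM2l => //.
by rewrite (bigD1 i) //= lerDl sumr_ge0.
Qed.

Lemma enorm_le_mxnorm n (u : 'rV[R]_n) : enorm u <= n%:R * `|u|.
Proof.
apply: le_trans (enorm_le_sum u) _.
rewrite mulr_natl -[X in _ *+ X](card_ord n) -sumr_const; apply: ler_sum => i _.
exact: entry_le_mxnorm.
Qed.

Lemma mxnorm_le_enorm n (u : 'rV[R]_n) : `|u| <= enorm u.
Proof.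
apply: mxnorm_le; first exact: enorm_ge0.
by move=> i j; rewrite [i]ord1; apply: entry_le_enorm.
Qed.

Lemma enorm_mul_bound m n (u : 'rV[R]_m) (M : 'M[R]_(m, n)) :
  enorm (u *m M) <= (n * m)%:R * (enorm u * `|M|).
Proof.
apply: le_trans (enorm_le_sum _) _.
rewrite natrM -mulrA mulr_natl -[X in _ *+ X](card_ord n) -sumr_const; apply: ler_sum => j _.
rewrite mxE; apply: le_trans (ler_norm_sum _ _ _) _.
rewrite mulr_natl -[X in _ *+ X](card_ord m) -sumr_const; apply: ler_sum => i _.
rewrite normrM; apply: ler_pM => //; first exact: entry_le_enorm.
exact: entry_le_mxnorm.
Qed.

Lemma mxnorm_tr m n (M : 'M[R]_(m, n)) : `|M^T| <= `|M|.
Proof.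
apply: mxnorm_le => // i j; rewrite mxE; exact: entry_le_mxnorm.
Qed.

End Mx.

Section Topo.
Variable R : realType.

Lemma cvg_enormP n (u : nat -> 'rV[R]_n) (x : 'rV[R]_n) :
  (u @ \oo --> x) <->
  (forall e, 0 < e -> exists N, forall k, (N <= k)%N -> enorm (u k - x) < e).
Proof.
split.
- move=> /cvgrPdist_lt H e e0.
  have ep : 0 < e / (n%:R + 1) by rewrite divr_gt0 // ltr_wpDl.
  have [N _ HN] := H _ ep.
  exists N => k Nk; have := HN k Nk; rewrite /= => Hk.
  apply: le_lt_trans (enorm_le_mxnorm _) _.
  rewrite -normrN opprB in Hk.
  have n0 : 0 <= (n%:R : R) by [].
  have : n%:R * `|u k - x| <= n%:R * (e / (n%:R + 1)) by apply: ler_wpM2l => //; apply: ltW.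
  move=> H1; apply: le_lt_trans H1 _.
  rewrite mulrA ltr_pdivrMr ?ltr_wpDl //; nra.
- move=> H; apply/cvgrPdist_lt => e e0.
  have [N HN] := H e e0; exists N => // k /= Nk.
  rewrite -normrN opprB; apply: le_lt_trans (mxnorm_le_enorm _) _; exact: HN.
Qed.

Lemma cvg_sub (T : topologicalType) (u : nat -> T) (l : T) (k : nat -> nat) :
  (forall j, (j <= k j)%N) -> u @ \oo --> l -> (u \o k) @ \oo --> l.
Proof.
move=> hk hu.
have hk' : k @ \oo --> \oo.
  move=> P [N _ HN]; exists N => // j /= Hj.
  by apply: HN; apply: leq_trans (hk j).
exact: cvg_comp hk' hu.
Qed.

Lemma vec_mx_norm m n (v : 'rV[R]_(m * n)) : `|vec_mx v| <= `|v|.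
Proof.
apply: mxnorm_le => // i j; rewrite mxE; exact: entry_le_mxnorm.
Qed.

Lemma vec_mx_continuous m n : continuous (@vec_mx R m n).
Proof.
move=> v; apply/(@cvgrPdist_lt _ _ _ (@nbhs _ 'rV[R]_(m * n) v)) => e e0.
apply/(@nbhs_normP _ 'rV[R]_(m * n)); exists e => //= w H.
by rewrite -linearB; apply: le_lt_trans (vec_mx_norm _) H.
Qed.

Lemma iso_entry m n (L : 'M[R]_(m, n)) i j : mx_isometry L -> `|L i j| <= 1.
Proof.
move=> iso.
have -> : L i j = row i L ord0 j by rewrite mxE.
apply: le_trans (entry_le_enorm _ _) _; rewrite rowE iso.
apply: enorm_le => //; rewrite expr1n /dot (bigD1 i) //= big1 => [|k ki].
  by rewrite !mxE !eqxx mulr1 addr0.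
by rewrite !mxE (negbTE ki) andbF mulr0.
Qed.

Lemma range_compact m n (A : Type) (Lam : A -> 'M[R]_(m, n)) :
  (forall a, mx_isometry (Lam a)) -> closed (range Lam) -> compact (range Lam).
Proof.
move=> iso cl.
set S := (@vec_mx R m n) @^-1` range Lam.
have Scl : closed S by apply: preimage_closed => // w _; apply: vec_mx_continuous.
have Sb : bounded_set S.
  exists 1; split => // M M1 v [a _ Hv].
  apply: le_trans (ltW M1); apply: mxnorm_le => // i k.
  rewrite [i]ord1 -(vec_mxK v) -Hv; case/mxvec_indexP: k => i' j'.
  by rewrite mxvecE; apply: iso_entry.
have Sc : compact S by apply: bounded_closed_compact.
have -> : range Lam = (@vec_mx R m n) @` S.
  apply/seteqP; split => M.
    by move=> HM; exists (mxvec M); rewrite /S /= mxvecK.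
  by move=> [v Sv <-].
apply: continuous_compact => //; apply: continuous_subspaceT => w.
exact: vec_mx_continuous.
Qed.

Lemma cluster_seq m n (A : Type) (Lam : A -> 'M[R]_(m, n)) (b : nat -> A) :
  compact (range Lam) ->
  exists a0, forall eta, 0 < eta -> forall N,
    exists2 k, (N <= k)%N & `|Lam (b k) - Lam a0| < eta.
Proof.
move=> cp.
have FR : ((fun k => Lam (b k)) @ \oo) (range Lam).
  by exists 0%N => // k _; exists (b k).
have [L [[a0 _ <-] clL]] := cp _ _ FR.
exists a0 => eta eta0 N.
have [P [[k Nk <-] Hb]] := clL [set Lam (b k) | k in [set k | (N <= k)%N]]
   (ball (Lam a0) eta) (ex_intro2 _ _ N I (fun k Hk => ex_intro2 _ _ k Hk erefl))
   (nbhsx_ballx _ _ eta0).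
exists k => //; move: Hb; rewrite -ball_normE /= => Hb.
by rewrite -normrN opprB.
Qed.

End Topo.

Lemma aux_bound (R : realType) (r t b : R) : 0 <= r -> 0 < t -> 0 <= b ->
  r^+2 <= t^+2 + 2*t*b*r + 2*t*b*t -> r <= (1 + 3*b)*t.
Proof.
move=> r0 t0 b0 H; rewrite leNgt; apply/negP => H2.
have H3 : 0 < r - 2*b*t by nra.
have H4 : (1+3*b)*t*(r - 2*b*t) <= r*(r-2*b*t) by apply: ler_wpM2r; lra.
have H5 : (1+3*b)*t*((1+b)*t) <= (1+3*b)*t*(r - 2*b*t) by apply: ler_wpM2l; nra.
nra.
Qed.

Section S. Variable R : realType.
Lemma tk_small (e : R) : 0 < e -> exists N : nat, ((N.+1)%:R : R)^-1 < e.
Proof.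
move=> e0; exists (Num.Def.archi_bound (e^-1)).
have h : e^-1 < (Num.Def.archi_bound (e^-1))%:R by apply: archi_boundP; rewrite invr_ge0 ltW.
rewrite invf_plt ?posrE //; apply: lt_le_trans h _.
by rewrite ler_nat.
Qed.
Lemma tk_mono (N k : nat) : (N <= k)%N -> ((k.+1)%:R : R)^-1 <= ((N.+1)%:R)^-1.
Proof. by move=> Nk; rewrite lef_pV2 ?posrE // ler_nat. Qed.
Lemma tk_gt0 (k : nat) : 0 < ((k.+1)%:R : R)^-1.
Proof. by rewrite invr_gt0. Qed.
Lemma two_eps (a b al be : R) : 0 <= al -> 0 <= be ->
  (forall e h, 0 < e -> 0 < h -> a <= b + al * e + be * h) -> a <= b.
Proof.
move=> al0 be0 H; apply/ler_addgt0Pr => ep ep0.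
have H1 := H (ep / (2 * (al + 1))) (ep / (2 * (be + 1))).
have p1 : 0 < ep / (2 * (al + 1)) by rewrite divr_gt0 // mulr_gt0 // ltr_wpDl.
have p2 : 0 < ep / (2 * (be + 1)) by rewrite divr_gt0 // mulr_gt0 // ltr_wpDl.
have := H1 p1 p2.
have q1 : al * (ep / (2 * (al + 1))) <= ep / 2.
  rewrite mulrA ler_pdivrMr ?mulr_gt0 ?ltr_wpDl //.
  have -> : ep / 2 * (2 * (al + 1)) = ep * (al + 1) by field.
  nra.
have q2 : be * (ep / (2 * (be + 1))) <= ep / 2.
  rewrite mulrA ler_pdivrMr ?mulr_gt0 ?ltr_wpDl //.
  have -> : ep / 2 * (2 * (be + 1)) = ep * (be + 1) by field.
  nra.
lra.
Qed.
End S.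

Section Main.
Variables (R : realType) (m n : nat) (G A : Type).
Variables (mul : G -> G -> G) (one : G) (inv : G -> G) (act : G -> 'M[R]_m).
Variables (gam : 'rV[R]_n -> 'rV[R]_m) (Lam : A -> 'M[R]_(m, n)).
Hypothesis HS : spectral_decomposition_system mul one inv act gam Lam.

Lemma Liso a : mx_isometry (Lam a).
Proof. by case: HS. Qed.

Lemma actiso s : mx_isometry (act s).
Proof. by case: HS => -[]. Qed.

Lemma HB X : exists a, X = gam X *m Lam a.
Proof. by case: HS. Qed.

Lemma HC X Y : dot X Y <= dot (gam X) (gam Y).
Proof. by case: HS. Qed.

Lemma gamL a b x : gam (x *m Lam a) = gam (x *m Lam b).
Proof. by case: HS => _ _ [tau [_ _ H]] _ _; rewrite !H. Qed.

Lemma orbitL a x : exists s, gam (x *m Lam a) = x *m act s.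
Proof.
case: HS => _ _ [tau [_ H H']] _ _; rewrite H'.
by have [s _ <-] := H x; exists s.
Qed.

Lemma invL a s x : gam ((x *m act s) *m Lam a) = gam (x *m Lam a).
Proof. by case: HS => _ _ [tau [H _ H']] _ _; rewrite !H' H. Qed.

Lemma fixL X a : gam (gam X *m Lam a) = gam X.
Proof. by have [b Hb] := HB X; rewrite {2}Hb (gamL a b). Qed.

Lemma act_inv s : act (inv s) *m act s = 1%:M.
Proof.
case: HS => -[_ _ H [H1 H2] _] _ _ _ _.
by apply: mulmx1C; rewrite -H2 H H1.
Qed.

Lemma enorm_gam X : enorm (gam X) = enorm X.
Proof. by have [a Ha] := HB X; rewrite {2}Ha Liso. Qed.

Lemma gam_lip X Z : enorm (gam Z - gam X) <= enorm (Z - X).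
Proof.
rewrite enorm_leP ?enorm_ge0 // -enorm_sq !enorm_sqB !enorm_gam.
have := HC Z X; lra.
Qed.

Lemma iso_enormB a (u v : 'rV[R]_m) : enorm (u *m Lam a - v *m Lam a) = enorm (u - v).
Proof. by rewrite -mulmxBl Liso. Qed.

Lemma dotL a (u v : 'rV[R]_m) : dot (u *m Lam a) (v *m Lam a) = dot u v.
Proof. exact/iso_dot/Liso. Qed.

Lemma mulLT a (u : 'rV[R]_m) : u *m Lam a *m (Lam a)^T = u.
Proof. exact/iso_mulT/Liso. Qed.

Lemma dotA s (u v : 'rV[R]_m) : dot (u *m act s) (v *m act s) = dot u v.
Proof. exact/iso_dot/actiso. Qed.

Variable phi : 'rV[R]_m -> \bar R.
Hypothesis Hphi : S_invariant act phi.

Lemma phi_gamL a x : phi (gam (x *m Lam a)) = phi x.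
Proof. by have [s ->] := orbitL a x; rewrite Hphi. Qed.

Lemma frechet_lift a x y :
  frechet_subdiff phi x y ->
  frechet_subdiff (phi \o gam) (x *m Lam a) (y *m Lam a).
Proof.
move=> [[r phix] Hf]; split; first by exists r; rewrite /= phi_gamL.
move=> e e0.
set c := enorm y.
have c0 : 0 <= c := enorm_ge0 y.
set b := c / e.
have b0 : 0 <= b by rewrite divr_ge0 // ltW.
set K := 1 + 3 * b.
have K0 : 0 < K by rewrite /K; lra.
have e'0 : 0 < e / (2 * K) by rewrite divr_gt0 // mulr_gt0.
have [d d0 Hd] := Hf _ e'0.
exists (d / K); first by rewrite divr_gt0.
move=> Z /andP [tpos tlt].
set X := x *m Lam a; set Y := y *m Lam a; set t := enorm (Z - X); set z := gam Z.
set eps := t / e.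
have t0 : 0 < t := tpos.
have te : 0 < t * e by rewrite mulr_gt0.
have eps0 : 0 < eps by rewrite divr_gt0.
have [s Hs] := orbitL a (x + eps *: y).
set x' := x *m act s; set y' := y *m act s.
have H1 : dot Z X + eps * dot Z Y <= dot z x' + eps * dot z y'.
  have := HC Z ((x + eps *: y) *m Lam a).
  by rewrite Hs !mulmxDl !dotDr -!scalemxAl !dotZr.
have H2 : dot z x' <= dot z (gam X).
  have := HC (z *m Lam a) (x' *m Lam a).
  by rewrite dotL /z fixL /x' invL.
have nz : enorm z = enorm Z by rewrite enorm_gam.
have ngX : enorm (gam X) = enorm X by rewrite enorm_gam.
have nX : enorm X = enorm x by rewrite /X Liso.
have nx' : enorm x' = enorm x by rewrite /x' actiso.
have ny' : enorm y' = c by rewrite /y' actiso.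
have nY : enorm Y = c by rewrite /Y Liso.
have dxy : dot x' y' = dot X Y by rewrite /x' /y' /X /Y dotA dotL.
have H3 : 2 * dot z (gam X) - t ^+ 2 <= 2 * dot Z X.
  have := enorm_sqB Z X; rewrite -/t => Et.
  have := enorm_sqB z (gam X); rewrite nz ngX => Ez.
  have := sqr_ge0 (enorm (z - gam X)); lra.
set r' := enorm (z - x').
have r'0 : 0 <= r' := enorm_ge0 _.
set D := dot z y' - dot Z Y.
have HD : D = dot (z - x') y' - dot (Z - X) Y by rewrite /D !dotBl dxy; ring.
have Hr2 : r' ^+ 2 <= t ^+ 2 + 2 * eps * D.
  have := enorm_sqB z x'; rewrite -/r' nz nx' -nX => Er.
  have := enorm_sqB Z X; rewrite -/t => Et.
  rewrite /D; nra.
have HDc : D <= c * r' + c * t.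
  rewrite HD; have := CS (z - x') y'; rewrite -/r' ny'.
  have := CSabs (Z - X) Y; rewrite -/t nY => /ler_normlP [HH _]; nra.
have epsc : eps * c = t * b by rewrite /eps /b mulrAC -mulrA.
have Hr' : r' <= K * t.
  apply: aux_bound => //; apply: le_trans Hr2 _.
  have : 2 * eps * D <= 2 * eps * (c * r' + c * t) by apply: ler_wpM2l => //; nra.
  have -> : 2 * eps * (c * r' + c * t) = 2 * (eps * c) * r' + 2 * (eps * c) * t by ring.
  rewrite epsc; lra.
have HD2 : - (t * e / 2) <= D.
  have H4 : - (t ^+ 2 / 2) <= eps * D by nra.
  have et : e * eps = t by rewrite /eps mulrC divfK // gt_eqF.
  have H5 : - (e * (t ^+ 2 / 2)) <= e * (eps * D) by rewrite -mulrN ler_wpM2l // ltW.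
  have H6 : e * (eps * D) = t * D by rewrite mulrA et.
  have : t * (- (t * e / 2)) <= t * D by rewrite -H6; apply: le_trans H5; lra.
  by rewrite ler_pM2l.
set u := z *m act (inv s).
have uz : u *m act s = z by rewrite /u -mulmxA act_inv mulmx1.
have phiu : phi z = phi u by rewrite -uz Hphi.
have nu : enorm (u - x) = r' by rewrite -(actiso s) mulmxBl uz.
have du : dot (u - x) y = dot (z - x') y'.
  by rewrite -(dotA s) mulmxBl uz.
rewrite /= phi_gamL phix -/z phiu.
have [r'E|r'pos] := eqVneq r' 0.
  have ux : u = x by apply/eqP; rewrite -subr_eq0; apply/eqP/enorm_eq0; rewrite nu.
  rewrite ux phix subee // lee_fin.
  have : dot (z - x') y' = 0 by rewrite -du ux subrr dot0l.
  lra.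
have r'p : 0 < r' by rewrite lt_def r'pos.
have := Hd u; rewrite nu r'p /= => Hu.
have : r' < d.
  apply: le_lt_trans Hr' _.
  by rewrite -ltr_pdivlMl // mulrC.
move=> /Hu; rewrite du phix => Hu2.
apply: le_trans Hu2; rewrite lee_fin.
have : e / (2 * K) * r' <= e / (2 * K) * (K * t) by apply: ler_wpM2l => //; apply: ltW.
have -> : e / (2 * K) * (K * t) = t * e / 2.
  by field; rewrite gt_eqF.
lra.
Qed.

Lemma frechet_decomp (Hcl : closed (range Lam)) X Y :
  frechet_subdiff (phi \o gam) X Y ->
  exists a y, [/\ frechet_subdiff phi (gam X) y, adapted gam Lam X a & Y = y *m Lam a].
Proof.
move=> [[r phiX] Hf].
set x := gam X; set c := enorm Y.
have c0 : 0 <= c := enorm_ge0 Y.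
pose tk (k : nat) : R := ((k.+1)%:R)^-1.
pose Z k := X + tk k *: Y.
pose b k := projT1 (cid (HB (Z k))).
have Hb k : Z k = gam (Z k) *m Lam (b k) := projT2 (cid (HB (Z k))).
have [a0 Hcl'] := cluster_seq b (range_compact Liso Hcl).
set L := Lam a0.
set C1 := (n * m)%:R : R.
set C2 := (m * n)%:R : R.
have C10 : 0 <= C1 by [].
have C20 : 0 <= C2 by [].
have nZX k : enorm (Z k - X) = tk k * c.
  by rewrite /Z addrC addKr enormZ ger0_norm // ltW // tk_gt0.
have nz k : enorm (gam (Z k) - x) <= tk k * c by rewrite -nZX; apply: gam_lip.
have nZW k : enorm (Z k - x *m Lam (b k)) <= tk k * c.
  by rewrite {1}(Hb k) iso_enormB.
have HXL : X = x *m L.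
  apply/eqP; rewrite -subr_eq0; apply/eqP/enorm_eq0; apply/le_anti.
  rewrite enorm_ge0 andbT.
  apply: (@two_eps _ _ 0 (2 * c) (C1 * enorm x));
    [lra | apply: mulr_ge0 => //; exact: enorm_ge0 | ].
  move=> e h e0 h0.
  have [N HN] := tk_small e0.
  have [k Nk Hk] := Hcl' h h0 N.
  have tkk : tk k <= tk N by apply: tk_mono.
  have h1 := enorm_tri X (Z k) (x *m L).
  have h2 := enorm_tri (Z k) (x *m Lam (b k)) (x *m L).
  have h3 : enorm (x *m Lam (b k) - x *m L) <= C1 * (enorm x * h).
    rewrite -mulmxBr; apply: le_trans (enorm_mul_bound _ _) _.
    apply: ler_wpM2l => //; apply: ler_wpM2l; first exact: enorm_ge0.
    exact: ltW.
  have h4 := nZW k.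
  have h5 : enorm (X - Z k) = tk k * c by rewrite enormB nZX.
  have h6 : tk k * c <= e * c by apply: ler_wpM2r => //; apply: ltW; apply: le_lt_trans HN.
  lra.
set w := enorm (Y *m L^T).
have w0 : 0 <= w := enorm_ge0 _.
have key : c ^+ 2 <= c * w.
  apply: (@two_eps _ _ _ (2 * c) (C2 * c ^+ 2));
    [lra | apply: mulr_ge0 => //; exact: sqr_ge0 | ].
  move=> e h e0 h0.
  have [d d0 Hd] := Hf e e0.
  have dc : 0 < d / (2 * c + 1) by rewrite divr_gt0 //; lra.
  have [N HN] := tk_small dc.
  have [k Nk Hk] := Hcl' h h0 N.
  have tkk : tk k <= tk N by apply: tk_mono.
  have tk0 : 0 < tk k := tk_gt0 _ k.
  set P := Lam (b k); set W := x *m P.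
  have gW : gam W = x by rewrite /W /x fixL.
  have nWZ : enorm (W - Z k) <= tk k * c by rewrite enormB; apply: nZW.
  have nWX : enorm (W - X) <= 2 * (tk k * c).
    have := enorm_tri W (Z k) X; rewrite nZX; lra.
  have tkd : 2 * (tk k * c) < d.
    have : tk k < d / (2 * c + 1) by apply: le_lt_trans HN.
    rewrite ltr_pdivlMr; last by lra.
    nra.
  have HWX : dot (W - X) Y <= e * (2 * (tk k * c)).
    have [W0|W0] := eqVneq (enorm (W - X)) 0.
      rewrite (enorm_eq0 W0) dot0l; apply: mulr_ge0; first exact: ltW.
      by apply: mulr_ge0 => //; apply: mulr_ge0 => //; apply: ltW.
    have Wp : 0 < enorm (W - X) by rewrite lt_def W0 enorm_ge0.
    have := Hd W; rewrite Wp /= => /(_ (le_lt_trans nWX tkd)).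
    have phiX' : phi (gam X) = r%:E := phiX.
    rewrite gW /x phiX' subee // lee_fin => HH.
    have : e * enorm (W - X) <= e * (2 * (tk k * c)) by apply: ler_wpM2l => //; apply: ltW.
    lra.
  have HZ : dot (Z k - X) Y = tk k * c ^+ 2.
    by rewrite /Z addrC addKr dotZl -enorm_sq.
  have HZW : dot (Z k - W) Y <= tk k * c * enorm (Y *m P^T).
    rewrite {1}(Hb k) /W -mulmxBl dot_mulmx.
    apply: le_trans (CS _ _) _; apply: ler_wpM2r; first exact: enorm_ge0.
    exact: nz.
  have HYP : enorm (Y *m P^T) <= w + C2 * (c * h).
    have -> : Y *m P^T = Y *m L^T + Y *m (P - L)^T.
      by rewrite linearB /= mulmxBr addrC subrK.
    apply: le_trans (enormD _ _) _; rewrite lerD2l.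
    apply: le_trans (enorm_mul_bound _ _) _.
    apply: ler_wpM2l => //; apply: ler_wpM2l => //.
    apply: le_trans (mxnorm_tr _) _; exact: ltW.
  have Hsplit : dot (Z k - X) Y = dot (Z k - W) Y + dot (W - X) Y.
    by rewrite -dotDl addrA subrK.
  have H7 : tk k * c ^+ 2 <= tk k * (c * w + 2 * c * e + C2 * c ^+ 2 * h).
    rewrite -HZ Hsplit.
    have : tk k * c * enorm (Y *m P^T) <= tk k * c * (w + C2 * (c * h)).
      by apply: ler_wpM2l => //; apply: mulr_ge0 => //; apply: ltW.
    nra.
  rewrite ler_pM2l // in H7; lra.
have wc : w <= c by apply: enorm_mulT; apply: Liso.
have c2w2 : c ^+ 2 <= w ^+ 2.
  have [c0'|cp] := eqVneq c 0; first by rewrite c0' expr0n sqr_ge0.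
  have cpos : 0 < c by rewrite lt_def cp c0.
  have : c <= w by rewrite -(ler_pM2l cpos) -expr2.
  nra.
have HY : Y = (Y *m L^T) *m L.
  apply/eqP; rewrite eq_sym -subr_eq0; apply/eqP/enorm_eq0.
  have E : enorm ((Y *m L^T) *m L - Y) ^+ 2 = c ^+ 2 - w ^+ 2.
    rewrite enorm_sqB Liso -/w dot_mulmx -enorm_sq -/w -/c; ring.
  have w2c2 : w ^+ 2 <= c ^+ 2 by nra.
  by apply/eqP; rewrite -sqrf_eq0 E subr_eq0 eq_le c2w2 w2c2.
exists a0; exists (Y *m L^T); split => //.
split; first by exists r; rewrite -phiX.
move=> e e0; have [d d0 Hd] := Hf e e0; exists d => // v /andP [v0 vd].
have E1 : enorm (v *m L - X) = enorm (v - x) by rewrite HXL iso_enormB.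
have E2 : dot (v *m L - X) Y = dot (v - x) (Y *m L^T).
  by rewrite {1}HXL -mulmxBl dot_mulmx.
have := Hd (v *m L); rewrite E1 E2 v0 vd /= phi_gamL.
by move=> /(_ isT).
Qed.

Lemma thm_i (Hcl : closed (range Lam)) X :
  frechet_subdiff (phi \o gam) X =
    [set Y | exists a y, [/\ frechet_subdiff phi (gam X) y,
                             adapted gam Lam X a & Y = y *m Lam a]].
Proof.
apply/seteqP; split => Y.
  exact: frechet_decomp.
move=> [a [y [Hy Had ->]]].
rewrite /adapted in Had; rewrite {1}Had.
exact: frechet_lift.
Qed.

Lemma thm_ii_sup X a y :
  limiting_subdiff phi (gam X) y -> adapted gam Lam X a ->
  limiting_subdiff (phi \o gam) X (y *m Lam a).
Proof.
move=> [[r phix] [xs [ys [cx cphi cy HF]]]] Had.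
split; first by exists r.
exists (fun k => xs k *m Lam a), (fun k => ys k *m Lam a); split.
- apply/cvg_enormP => e e0; have [N HN] := (cvg_enormP _ _).1 cx e e0.
  by exists N => k Nk; rewrite Had iso_enormB; apply: HN.
- have -> : (fun k => (phi \o gam) (xs k *m Lam a)) = (fun k => phi (xs k)).
    by apply: funext => k /=; rewrite phi_gamL.
  exact: cphi.
- apply/cvg_enormP => e e0; have [N HN] := (cvg_enormP _ _).1 cy e e0.
  by exists N => k Nk; rewrite iso_enormB; apply: HN.
- by move=> k; apply: frechet_lift.
Qed.

Lemma thm_ii_sub (Hcl : closed (range Lam)) X Y :
  limiting_subdiff (phi \o gam) X Y ->
  exists a y, [/\ limiting_subdiff phi (gam X) y,
                  adapted gam Lam X a & Y = y *m Lam a].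
Proof.
move=> [[r phiX] [xs [ys [cx cphi cy HF]]]].
have D k := frechet_decomp Hcl (HF k).
pose ak k := projT1 (cid (D k)).
have D' k := projT2 (cid (D k)).
pose yk k := projT1 (cid (D' k)).
have Hk k : [/\ frechet_subdiff phi (gam (xs k)) (yk k),
   adapted gam Lam (xs k) (ak k) & ys k = yk k *m Lam (ak k)] := projT2 (cid (D' k)).
have [a0 Hcl'] := cluster_seq ak (range_compact Liso Hcl).
set L := Lam a0; set x := gam X; set c := enorm Y.
have c0 : 0 <= c := enorm_ge0 Y.
pose tk (k : nat) : R := ((k.+1)%:R)^-1.
pose kj j := s2val (cid2 (Hcl' (tk j) (tk_gt0 _ j) j)).
have kjP j : (j <= kj j)%N := s2valP (cid2 (Hcl' (tk j) (tk_gt0 _ j) j)).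
have kjL j : `|Lam (ak (kj j)) - L| < tk j := s2valP' (cid2 (Hcl' (tk j) (tk_gt0 _ j) j)).
set C1 := (n * m)%:R : R.
set C2 := (m * n)%:R : R.
have C10 : 0 <= C1 by [].
have C20 : 0 <= C2 by [].
have est k : enorm (yk k - Y *m L^T) <= enorm (ys k - Y) + C2 * (c * `|Lam (ak k) - L|).
  have [_ _ Hys] := Hk k.
  have E : yk k - Y *m L^T = (ys k - Y) *m (Lam (ak k))^T + Y *m (Lam (ak k) - L)^T.
    rewrite Hys mulmxBl mulLT raddfB /= mulmxBr.
    by rewrite addrA subrK.
  rewrite E; apply: le_trans (enormD _ _) _; apply: lerD.
    by apply: enorm_mulT; apply: Liso.
  apply: le_trans (enorm_mul_bound _ _) _.
  apply: ler_wpM2l => //; apply: ler_wpM2l => //; exact: mxnorm_tr.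
have HXL : X = x *m L.
  apply/eqP; rewrite -subr_eq0; apply/eqP/enorm_eq0; apply/le_anti.
  rewrite enorm_ge0 andbT.
  apply: (@two_eps _ _ 0 2 (C1 * enorm x));
    [lra | apply: mulr_ge0 => //; exact: enorm_ge0 | ].
  move=> e h e0 h0.
  have [N HN] := (cvg_enormP _ _).1 cx e e0.
  have [k Nk Hkk] := Hcl' h h0 N.
  have [_ Hxs _] := Hk k.
  have h1 := enorm_tri X (xs k) (x *m L).
  have h2 := enorm_tri (xs k) (x *m Lam (ak k)) (x *m L).
  have h3 : enorm (x *m Lam (ak k) - x *m L) <= C1 * (enorm x * h).
    rewrite -mulmxBr; apply: le_trans (enorm_mul_bound _ _) _.
    apply: ler_wpM2l => //; apply: ler_wpM2l; first exact: enorm_ge0.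
    exact: ltW.
  have h4 : enorm (xs k - x *m Lam (ak k)) <= enorm (xs k - X).
    by rewrite {1}Hxs iso_enormB; apply: gam_lip.
  have h5 : enorm (X - xs k) < e by rewrite enormB; apply: HN.
  have h6 : enorm (xs k - X) < e by apply: HN.
  lra.
have HY : Y = (Y *m L^T) *m L.
  apply/eqP; rewrite -subr_eq0; apply/eqP/enorm_eq0; apply/le_anti.
  rewrite enorm_ge0 andbT.
  apply: (@two_eps _ _ 0 2 (C1 * (c + 1) + C2 * c));
    [lra | by apply: addr_ge0; apply: mulr_ge0 => //; lra | ].
  move=> e h e0 h0.
  have [N1 HN1] := (cvg_enormP _ _).1 cy e e0.
  have [N2 HN2] := (cvg_enormP _ _).1 cy 1 ltr01.
  have [k Nk Hkk] := Hcl' h h0 (maxn N1 N2).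
  have k1 : (N1 <= k)%N by apply: leq_trans Nk; apply: leq_maxl.
  have k2 : (N2 <= k)%N by apply: leq_trans Nk; apply: leq_maxr.
  have [_ _ Hys] := Hk k.
  set P := Lam (ak k).
  have E : Y - Y *m L^T *m L = (Y - ys k) + (yk k *m P - yk k *m L) + (yk k - Y *m L^T) *m L.
    by rewrite Hys mulmxBl; rewrite /P; rewrite !addrA subrK addrNK.
  rewrite E.
  have g1 := enormD (Y - ys k + (yk k *m P - yk k *m L)) ((yk k - Y *m L^T) *m L).
  have g2 := enormD (Y - ys k) (yk k *m P - yk k *m L).
  have g3 : enorm ((yk k - Y *m L^T) *m L) <= e + C2 * (c * h).
    rewrite Liso; apply: le_trans (est k) _; apply: lerD; first exact/ltW/HN1.
    apply: ler_wpM2l => //; apply: ler_wpM2l => //; exact: ltW.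
  have nyk : enorm (yk k) <= c + 1.
    have h8 : enorm (ys k) <= enorm (ys k - Y) + c.
      by have := enorm_tri (ys k) Y 0; rewrite !subr0.
    have h9 : enorm (ys k) = enorm (yk k) by rewrite Hys Liso.
    have h7 := HN2 k k2; lra.
  have g4 : enorm (yk k *m P - yk k *m L) <= C1 * ((c + 1) * h).
    rewrite -mulmxBr; apply: le_trans (enorm_mul_bound _ _) _.
    apply: ler_wpM2l => //; apply: ler_pM => //; [exact: enorm_ge0 | exact: ltW].
  have g5 : enorm (Y - ys k) < e by rewrite enormB; apply: HN1.
  have q : C1 * ((c + 1) * h) + C2 * (c * h) = (C1 * (c + 1) + C2 * c) * h by ring.
  lra.
exists a0; exists (Y *m L^T); split => //.
split; first by exists r.
exists (fun j => gam (xs (kj j))), (fun j => yk (kj j)); split.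
- apply/cvg_enormP => e e0; have [N HN] := (cvg_enormP _ _).1 cx e e0.
  exists N => j Nj; apply: le_lt_trans (gam_lip _ _) _; apply: HN.
  exact: leq_trans (kjP j).
- exact: (cvg_sub kjP cphi).
- apply/cvg_enormP => e e0.
  have e2 : 0 < e / 2 by rewrite divr_gt0.
  have [N1 HN1] := (cvg_enormP _ _).1 cy _ e2.
  have cc : 0 <= C2 * c := mulr_ge0 C20 c0.
  have e3 : 0 < e / 2 / (C2 * c + 1) by rewrite divr_gt0 // ltr_wpDl.
  have [N2 HN2] := tk_small e3.
  exists (maxn N1 N2) => j Nj.
  have j1 : (N1 <= kj j)%N.
    by apply: leq_trans (kjP j); apply: leq_trans Nj; apply: leq_maxl.
  have j2 : (N2 <= j)%N by apply: leq_trans Nj; apply: leq_maxr.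
  apply: le_lt_trans (est _) _.
  have f1 := HN1 _ j1.
  have f2 : `|Lam (ak (kj j)) - L| < e / 2 / (C2 * c + 1).
    apply: lt_le_trans (kjL j) _; apply: le_trans (tk_mono _ j2) _; exact: ltW.
  have f3 : C2 * c * `|Lam (ak (kj j)) - L| <= (C2 * c + 1) * `|Lam (ak (kj j)) - L|.
    by apply: ler_wpM2r => //; rewrite lerDl.
  have f4 : (C2 * c + 1) * `|Lam (ak (kj j)) - L| < e / 2.
    by rewrite mulrC -ltr_pdivlMr // ltr_wpDl.
  rewrite mulrA; lra.
- by move=> j; have [] := Hk (kj j).
Qed.

End Main.

Theorem theorem4p1 (R : realType) (m n : nat) (G A : Type)
  (mul : G -> G -> G) (one : G) (inv : G -> G) (act : G -> 'M[R]_m)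
  (gam : 'rV[R]_n -> 'rV[R]_m) (Lam : A -> 'M[R]_(m, n))
  (HS : spectral_decomposition_system mul one inv act gam Lam)
  (Hcl : closed (range Lam))
  (phi : 'rV[R]_m -> \bar R) (Hphi : S_invariant act phi)
  (X : 'rV[R]_n) :
  frechet_subdiff (phi \o gam) X =
    [set Y | exists a y, [/\ frechet_subdiff phi (gam X) y,
                             adapted gam Lam X a & Y = y *m Lam a]]
  /\
  limiting_subdiff (phi \o gam) X =
    [set Y | exists a y, [/\ limiting_subdiff phi (gam X) y,
                             adapted gam Lam X a & Y = y *m Lam a]].
Proof.
split; first exact: (thm_i HS Hphi Hcl X).
apply/seteqP; split => Y.
  exact: (thm_ii_sub HS Hphi Hcl).
move=> [a [y [Hy Had ->]]].
exact: (thm_ii_sup HS Hphi Hy Had).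
Qed.
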